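(* A hermitian operator $R$ on $\mathcal H_{2N-1}\otimes\cdots\otimes\mathcal H_0$ satisfies the normalization conditions of a deterministic quantum $N$-comb (i.e. there exist $R^{(n)}$ as in the definition) if and only if $$R=\frac{1}{d_{2N-1}d_{2N-3}\cdots d_1}\,I_{2N-1,\dots,0}+X$$ for some $X$ in the real linear span of $\mathbb D_{(N)}$. Consequently $R$ is a deterministic quantum $N$-comb iff it is positive and of this form.
   Context: All Hilbert spaces are finite-dimensional, $d_k=\dim\mathcal H_k$, $I_k$ is the identity on $\mathcal H_k$ and $I_{2N-1,\dots,0}$ the identity on the whole space. A deterministic quantum $N$-comb is a positive operator $R$ for which there are operators $R^{(n)}$ on $\mathcal H_0\otimes\cdots\otimes\mathcal H_{2n-1}$, $n=1,\dots,N$, with $R^{(N)}=R$, $\operatorname{Tr}_{2n-1}R^{(n)}=I_{2n-2}\otimes R^{(n-1)}$ for $2\le n\le N$, and $\operatorname{Tr}_1R^{(1)}=I_0$. For each $k$ let $\{E^{(k)}_a\}_{a=2}^{d_k^2}$ be a basis of traceless hermitian operators on $\mathcal H_k$, and for even $k$ let $\{F^{(k)}_j\}$ be a basis of hermitian operators on $\mathcal H_k\otimes\cdots\otimes\mathcal H_0$. $\mathbb D_{(N)}$ is the set of operators $I_{2N-1}\otimes\cdots\otimes I_{2n}\otimes E^{(2n-1)}_a\otimes F^{(2n-2)}_j$, $n=1,\dots,N$. *)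

(* Defs.v *)
From HB Require Import structures.
From mathcomp Require Import all_boot all_order all_algebra.
Set Implicit Arguments. Unset Strict Implicit. Unset Printing Implicit Defensive.
Import Order.TTheory GRing.Theory Num.Theory.
Local Open Scope ring_scope.

(* Splitting an index of 'I_(m*n) into a pair (i, j), i major (Kronecker order);
   inverse of mxvec_index. *)
Definition tens_split (m n : nat) (k : 'I_(m * n)) : 'I_m * 'I_n :=
  enum_val (cast_ord (esym (mxvec_cast m n)) k).

(* Kronecker (tensor) product A (x) B, A acting on the left (major) factor. *)
Definition tensmx {R : pzSemiRingType} (m1 n1 m2 n2 : nat)
  (A : 'M[R]_(m1, n1)) (B : 'M[R]_(m2, n2)) : 'M[R]_(m1 * m2, n1 * n2) :=
  \matrix_(k, l) (A (tens_split k).1 (tens_split l).1 *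
                  B (tens_split k).2 (tens_split l).2).

(* Partial trace over the left (major) factor: Tr_1 on C^p (x) C^q. *)
Definition ptrace {R : pzSemiRingType} (p q : nat) (A : 'M[R]_(p * q)) : 'M[R]_q :=
  \matrix_(i, j) \sum_(k < p) A (mxvec_index k i) (mxvec_index k j).

(* dimension of H_{n-1} (x) ... (x) H_0 ;  Dim d 0 = 1 (empty tensor product) *)
Fixpoint Dim (d : nat -> nat) (n : nat) : nat :=
  if n is n'.+1 then (d n' * Dim d n')%N else 1%N.

(* Tr_{n} : operators on H_n (x) ... (x) H_0  ->  operators on H_{n-1} (x) ... (x) H_0 *)
Definition Tr_top {R : pzSemiRingType} (d : nat -> nat) (n : nat)
  (X : 'M[R]_(Dim d n.+1)) : 'M[R]_(Dim d n) := @ptrace R (d n) (Dim d n) X.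

Definition I_top {R : pzSemiRingType} (d : nat -> nat) (n : nat)
  (Y : 'M[R]_(Dim d n)) : 'M[R]_(Dim d n.+1) := tensmx (1%:M : 'M[R]_(d n)) Y.

(* liftI d n M Y = I_{M-1} (x) ... (x) I_n (x) Y  for n <= M
   (Y an operator on H_{n-1} (x) ... (x) H_0).  Only used with n <= M. *)
Fixpoint liftI {R : pzSemiRingType} (d : nat -> nat) (n M : nat) :
    'M[R]_(Dim d n) -> 'M[R]_(Dim d M) :=
  match M return 'M[R]_(Dim d n) -> 'M[R]_(Dim d M) with
  | 0 => fun Y => conform_mx 0 Y
  | M'.+1 => fun Y => if n == M'.+1 then conform_mx 0 Y
                      else I_top (@liftI R d n M' Y)
  end.

(* Normalization conditions of a deterministic quantum N-comb:
   there are R^(n) on H_0 (x) ... (x) H_{2n-1} (here Rs n), n = 1..N, with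
   R^(N) = R, Tr_{2n-1} R^(n) = I_{2n-2} (x) R^(n-1) for 2 <= n <= N,
   and Tr_1 R^(1) = I_0. *)
Definition comb_normalized {C : numClosedFieldType} (d : nat -> nat) (N : nat)
    (R : 'M[C]_(Dim d N.*2)) : Prop :=
  exists Rs : forall n : nat, 'M[C]_(Dim d n.*2),
   (* Rs n plays the role of R^(n); only 1 <= n <= N matter *)
    [/\ Rs N = R,
        @Tr_top C d 1 (Rs 1%N) = 1%:M &
        forall m : nat, (0 < m < N)%N ->
          @Tr_top C d m.*2.+1 (Rs m.+1) = @I_top C d m.*2 (Rs m)].

Definition psd {C : numClosedFieldType} (n : nat) (A : 'M[C]_n) : Prop :=
  forall v : 'cV[C]_n, 0 <= ((map_mx Num.conj v)^T *m A *m v) 0 0.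

Definition det_comb {C : numClosedFieldType} (d : nat -> nat) (N : nat)
    (R : 'M[C]_(Dim d N.*2)) : Prop :=
  psd R /\ comb_normalized R.

Definition real_basis {C : numClosedFieldType} (n k : nat)
    (P : 'M[C]_n -> Prop) (B : 'I_k -> 'M[C]_n) : Prop :=
  [/\ forall i, P (B i),
      forall c : 'I_k -> C, (forall i, c i \is Num.real) ->
         \sum_(i < k) c i *: B i = 0 -> forall i, c i = 0 &
      forall A, P A -> exists c : 'I_k -> C,
         (forall i, c i \is Num.real) /\ A = \sum_(i < k) c i *: B i].

Definition herm_op {C : numClosedFieldType} (n : nat) (A : 'M[C]_n) : Prop :=
  A^T = map_mx Num.conj A.

Definition traceless_herm_op {C : numClosedFieldType} (n : nat) (A : 'M[C]_n) : Prop :=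
  herm_op A /\ \tr A = 0.

(* The element  I_{2N-1} (x) ... (x) I_{2n} (x) E (x) F  of D_(N), with n = m+1,
   E on H_{2m+1} and F on H_{2m} (x) ... (x) H_0. *)
Definition D_elem {C : numClosedFieldType} (d : nat -> nat) (N m : nat)
    (E : 'M[C]_(d m.*2.+1)) (F : 'M[C]_(Dim d m.*2.+1)) : 'M[C]_(Dim d N.*2) :=
  @liftI C d m.*2.+2 N.*2 (tensmx E F : 'M[C]_(Dim d m.*2.+2)).

Definition in_real_span_D {C : numClosedFieldType} (d : nat -> nat) (N : nat)
    (mE mF : nat -> nat)
    (E : forall k : nat, 'I_(mE k) -> 'M[C]_(d k))
    (F : forall k : nat, 'I_(mF k) -> 'M[C]_(Dim d k.+1))
    (X : 'M[C]_(Dim d N.*2)) : Prop :=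
  exists c : forall m : 'I_N, 'I_(mE (m : nat).*2.+1) -> 'I_(mF (m : nat).*2) -> C,
    (forall m a j, c m a j \is Num.real) /\
    X = \sum_(m < N) \sum_(a < mE (m : nat).*2.+1) \sum_(j < mF (m : nat).*2)
          c m a j *: D_elem N (E _ a) (F _ j).

(* Main.v *)
Require Import Defs.
From HB Require Import structures.
From mathcomp Require Import all_boot all_order all_algebra.
From Stdlib Require Import IndefiniteDescription.
From mathcomp Require Import ring zify.
Set Implicit Arguments. Unset Strict Implicit. Unset Printing Implicit Defensive.
Import Order.TTheory GRing.Theory Num.Theory.
Local Open Scope ring_scope.

Lemma tens_splitK m n (i : 'I_m) (j : 'I_n) : tens_split (mxvec_index i j) = (i, j).
Proof. by rewrite /tens_split /mxvec_index cast_ordK enum_rankK. Qed.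

Section C.
Variable C : numClosedFieldType.

Lemma tensmxE m1 n1 m2 n2 (A : 'M[C]_(m1, n1)) (B : 'M[C]_(m2, n2)) i j k l :
  tensmx A B (mxvec_index i j) (mxvec_index k l) = A i k * B j l.
Proof. by rewrite /tensmx mxE !tens_splitK. Qed.

Lemma ptraceE p q (A : 'M[C]_(p * q)) i j :
  ptrace A i j = \sum_(k < p) A (mxvec_index k i) (mxvec_index k j).
Proof. by rewrite /ptrace mxE. Qed.

Lemma tensmx_sumL p q I (r : seq I) (P : pred I) (c : I -> C) (A : I -> 'M[C]_p)
   (B : 'M[C]_q) :
  tensmx (\sum_(i <- r | P i) c i *: A i) B = \sum_(i <- r | P i) c i *: tensmx (A i) B.
Proof.
apply/matrixP=> k l; case/mxvec_indexP: k => i j; case/mxvec_indexP: l => i' j'.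
rewrite tensmxE !summxE mulr_suml; apply: eq_bigr => x _.
by rewrite !mxE !tens_splitK mulrA.
Qed.

Lemma tensmx_sumR p q I (r : seq I) (P : pred I) (c : I -> C) (A : 'M[C]_p)
   (B : I -> 'M[C]_q) :
  tensmx A (\sum_(i <- r | P i) c i *: B i) = \sum_(i <- r | P i) c i *: tensmx A (B i).
Proof.
apply/matrixP=> k l; case/mxvec_indexP: k => i j; case/mxvec_indexP: l => i' j'.
rewrite tensmxE !summxE mulr_sumr; apply: eq_bigr => x _.
by rewrite !mxE !tens_splitK mulrCA.
Qed.

Lemma tensmxDR p q (A : 'M[C]_p) (B B' : 'M[C]_q) :
  tensmx A (B + B') = tensmx A B + tensmx A B'.
Proof.
apply/matrixP=> k l; case/mxvec_indexP: k => i j; case/mxvec_indexP: l => i' j'.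
by rewrite !mxE !tens_splitK mulrDr.
Qed.

Lemma tensmxZR p q a (A : 'M[C]_p) (B : 'M[C]_q) :
  tensmx A (a *: B) = a *: tensmx A B.
Proof.
apply/matrixP=> k l; case/mxvec_indexP: k => i j; case/mxvec_indexP: l => i' j'.
by rewrite !mxE !tens_splitK mulrCA.
Qed.

Lemma tensmx0R p q (A : 'M[C]_p) : tensmx A (0 : 'M[C]_q) = 0.
Proof. by rewrite -(scale0r 0) tensmxZR scale0r. Qed.

Lemma tensmx11 p q : tensmx (1%:M : 'M[C]_p) (1%:M : 'M[C]_q) = 1%:M.
Proof.
apply/matrixP=> k l; case/mxvec_indexP: k => i j; case/mxvec_indexP: l => i' j'.
rewrite tensmxE !mxE.
have -> : (mxvec_index i j == mxvec_index i' j') = (i == i') && (j == j').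
  apply/eqP/andP => [E|[/eqP-> /eqP->] //].
  by have := congr1 (@tens_split _ _) E; rewrite !tens_splitK => -[-> ->].
by case: (i == i'); case: (j == j'); rewrite ?mulr1 ?mulr0 ?mul0r.
Qed.

Lemma ptrace_tens p q (A : 'M[C]_p) (B : 'M[C]_q) : ptrace (tensmx A B) = \tr A *: B.
Proof.
apply/matrixP=> i j; rewrite ptraceE !mxE /mxtrace mulr_suml.
by apply: eq_bigr => k _; rewrite tensmxE.
Qed.

Lemma ptraceD p q (X Y : 'M[C]_(p * q)) : ptrace (X + Y) = ptrace X + ptrace Y.
Proof. by apply/matrixP=> i j; rewrite !mxE -big_split /=; apply: eq_bigr => k _; rewrite ?mxE. Qed.

Lemma ptraceZ p q a (X : 'M[C]_(p * q)) : ptrace (a *: X) = a *: ptrace X.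
Proof. by apply/matrixP=> i j; rewrite !mxE mulr_sumr; apply: eq_bigr => k _; rewrite ?mxE. Qed.

Lemma ptrace0 p q : ptrace (0 : 'M[C]_(p * q)) = 0.
Proof. by rewrite -(scale0r 0) ptraceZ scale0r. Qed.

Lemma ptraceN p q (X : 'M[C]_(p * q)) : ptrace (- X) = - ptrace X.
Proof. by rewrite -scaleN1r ptraceZ scaleN1r. Qed.

Lemma ptrace_sum p q I (r : seq I) (P : pred I) (X : I -> 'M[C]_(p * q)) :
  ptrace (\sum_(i <- r | P i) X i) = \sum_(i <- r | P i) ptrace (X i).
Proof. exact: (big_morph _ (@ptraceD p q) (@ptrace0 p q)). Qed.

Lemma tr1 p : \tr (1%:M : 'M[C]_p) = p%:R.
Proof. exact: mxtrace1. Qed.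

Lemma hermE n (A : 'M[C]_n) : herm_op A <-> (forall i j, (A i j)^* = A j i).
Proof.
rewrite /herm_op; split=> [H i j | H]; last by apply/matrixP=> i j; rewrite !mxE H.
have := congr1 (fun M : 'M[C]_n => M j i) H; rewrite !mxE => E; by rewrite E conjCK.
Qed.

Lemma hermD n (A B : 'M[C]_n) : herm_op A -> herm_op B -> herm_op (A + B).
Proof. by move=> /hermE HA /hermE HB; apply/hermE => i j; rewrite !mxE rmorphD /= HA HB. Qed.

Lemma hermZ n a (A : 'M[C]_n) : a \is Num.real -> herm_op A -> herm_op (a *: A).
Proof. by move=> Ha /hermE HA; apply/hermE => i j; rewrite !mxE rmorphM /= HA conj_Creal. Qed.

Lemma hermN n (A : 'M[C]_n) : herm_op A -> herm_op (- A).
Proof. by move=> /hermE HA; apply/hermE => i j; rewrite !mxE rmorphN /= HA. Qed.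

Lemma herm_ptrace p q (A : 'M[C]_(p * q)) : herm_op A -> herm_op (ptrace A).
Proof.
move=> /hermE HA; apply/hermE => i j; rewrite !ptraceE rmorph_sum /=.
by apply: eq_bigr => k _; rewrite HA.
Qed.

Lemma herm_tens1 p q (A : 'M[C]_q) : herm_op A -> herm_op (tensmx (1%:M : 'M[C]_p) A).
Proof.
move=> /hermE HA; apply/hermE => k l.
case/mxvec_indexP: k => i j; case/mxvec_indexP: l => i' j'.
by rewrite !tensmxE rmorphM /= HA !mxE eq_sym; case: (i' == i); rewrite ?conjC1 ?conjC0.
Qed.


Lemma cindep k n (B : 'I_k -> 'M[C]_n) : (forall i, herm_op (B i)) ->
  (forall c : 'I_k -> C, (forall i, c i \is Num.real) -> \sum_(i < k) c i *: B i = 0 -> forall i, c i = 0) ->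
  forall w : 'I_k -> C, \sum_(i < k) w i *: B i = 0 -> forall i, w i = 0.
Proof.
move=> Bh Bind w Hw.
have Hc : \sum_(i < k) (w i)^* *: B i = 0.
  apply/matrixP => x y; have := congr1 (fun M : 'M[C]_n => M y x) Hw.
  rewrite !summxE !mxE => /(congr1 (@Num.conj C)); rewrite rmorph_sum /= conjC0 => E.
  apply: etrans E.
  by apply: eq_bigr => i _; rewrite !mxE rmorphM /= (proj1 (hermE _) (Bh i)).
have Hu := Bind (fun i => w i + (w i)^*).
have Hv := Bind (fun i => 'i * (w i - (w i)^*)).
move=> i.
have u0 : w i + (w i)^* = 0.
  apply: Hu => [j|].
    by rewrite CrealE rmorphD /= conjCK addrC.
  under eq_bigr do rewrite scalerDl.
  by rewrite big_split /= Hw Hc addr0.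
have v0 : 'i * (w i - (w i)^*) = 0.
  apply: Hv => [j|].
    rewrite CrealE rmorphM /= rmorphB /= conjCK conjCi; apply/eqP; ring.
  under eq_bigr do rewrite -scalerA scalerBl.
  by rewrite -scaler_sumr sumrB Hw Hc subrr scaler0.
move: v0 => /eqP; rewrite mulf_eq0 (negbTE (@neq0Ci C)) /= subr_eq0 => /eqP wE.
move: u0; rewrite -wE => /eqP; rewrite -mulr2n mulrn_eq0 /= => /eqP //.
Qed.

Lemma half_real : (2 : C)^-1 \is Num.real.
Proof. by rewrite rpredV realn. Qed.

Lemma dec p q ke kf (E : 'I_ke -> 'M[C]_p) (F : 'I_kf -> 'M[C]_q) :
 real_basis (@traceless_herm_op C p) E -> real_basis (@herm_op C q) F ->
 forall Y : 'M[C]_(p*q), herm_op Y -> ptrace Y = 0 ->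
 exists c : 'I_ke -> 'I_kf -> C, (forall a j, c a j \is Num.real) /\
   Y = \sum_(a < ke) \sum_(j < kf) c a j *: tensmx (E a) (F j).
Proof.
case=> [EP Eind Espan] [FP Find Fspan] Y HY HtY.
pose blk s t : 'M[C]_q := \matrix_(i,j) Y (mxvec_index s i) (mxvec_index t j).
pose H1 s t : 'M[C]_q := \matrix_(i,j) ((blk s t i j + (blk s t j i)^*) / 2).
pose H2 s t : 'M[C]_q := \matrix_(i,j) ((blk s t i j - (blk s t j i)^*) * (- 'i / 2)).
have hH1 s t : herm_op (H1 s t).
  apply/hermE => i j; rewrite !mxE rmorphM /= rmorphD /= conjCK addrC.
  by rewrite (conj_Creal half_real).
have hH2 s t : herm_op (H2 s t).
  apply/hermE => i j; rewrite !mxE rmorphM /= rmorphB /= conjCK rmorphM /= rmorphN /= conjCi.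
  rewrite (conj_Creal half_real); set u := blk s t i j; set v := blk s t j i.
  ring.
have blkE s t : blk s t = H1 s t + 'i *: H2 s t.
  apply/matrixP=> i j; rewrite [RHS]mxE [X in _ = X + _]mxE [X in _ = _ + X]mxE [X in _ = _ + _ * X]mxE.
  set u := blk s t i j; set v := (blk s t j i)^*.
  have -> : 'i * ((u - v) * (- 'i / 2)) = - ('i * 'i) * ((u - v) / 2) by ring.
  rewrite mulCii opprK mul1r; by field.
have cF A : herm_op A -> {c : 'I_kf -> C | (forall i, c i \is Num.real) /\ A = \sum_(i < kf) c i *: F i}.
  by move=> h; apply: constructive_indefinite_description; apply: Fspan.
pose a s t := sval (cF _ (hH1 s t)).
pose b s t := sval (cF _ (hH2 s t)).
have Ha s t : H1 s t = \sum_(j < kf) a s t j *: F j by rewrite /a; case: (cF _ _) => ? [].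
have Hb s t : H2 s t = \sum_(j < kf) b s t j *: F j by rewrite /b; case: (cF _ _) => ? [].
pose z s t j := a s t j + 'i * b s t j.
pose K j : 'M[C]_p := \matrix_(s,t) z s t j.
have Yent s t i l : Y (mxvec_index s i) (mxvec_index t l) = \sum_(j < kf) z s t j * F j i l.
  transitivity (blk s t i l); first by rewrite mxE.
  rewrite blkE Ha Hb !mxE !summxE big_distrr -big_split; apply: eq_bigr => j _ /=.
  by rewrite !mxE /z mulrDl mulrA.
have YE : Y = \sum_(j < kf) tensmx (K j) (F j).
  apply/matrixP => k l; case/mxvec_indexP: k => s i; case/mxvec_indexP: l => t l.
  rewrite summxE Yent; apply: eq_bigr => j _; by rewrite tensmxE mxE.
have Kh j : herm_op (K j).
  apply/hermE => s t; rewrite !mxE.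
  suff : forall j, (z s t j)^* - z t s j = 0 by move=> /(_ j) /eqP; rewrite subr_eq0 => /eqP.
  apply: (cindep FP Find).
  apply/matrixP => i l; rewrite summxE mxE.
  under eq_bigr do rewrite mxE mulrBl.
  rewrite sumrB -Yent.
  transitivity ((Y (mxvec_index s l) (mxvec_index t i))^* - Y (mxvec_index t i) (mxvec_index s l)).
    congr (_ - _); rewrite Yent rmorph_sum /=; apply: eq_bigr => j' _.
    by rewrite rmorphM /= (proj1 (hermE _) (FP j')).
  by rewrite (proj1 (hermE _) HY) subrr.
have trK j : \tr (K j) \is Num.real.
  rewrite rpred_sum // => s _; rewrite CrealE; apply/eqP.
  by rewrite (proj1 (hermE _) (Kh j)).
have trK0 : forall j, \tr (K j) = 0.
  apply: (Find (fun j => \tr (K j))) => //; apply: etrans HtY; rewrite YE ptrace_sum; apply: eq_bigr => j _.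
  by rewrite ptrace_tens.
have cE j : {c : 'I_ke -> C | (forall i, c i \is Num.real) /\ K j = \sum_(i < ke) c i *: E i}.
  by apply: constructive_indefinite_description; apply: Espan; split.
exists (fun a j => sval (cE j) a); split.
  by move=> a' j; case: (cE j) => ? [].
rewrite YE exchange_big /=; apply: eq_bigr => j _.
case: (cE j) => r [_ Kr] /=; rewrite Kr; exact: tensmx_sumL.
Qed.


Lemma ptrace1 p q : ptrace (1%:M : 'M[C]_(p * q)) = p%:R *: 1%:M.
Proof. by rewrite -tensmx11 ptrace_tens tr1. Qed.

Section Lift.
Variable d : nat -> nat.
Local Notation lift n M := (@liftI C d n M).
Local Notation Itop n := (@I_top C d n).

Lemma liftI_id n (Y : 'M[C]_(Dim d n)) : lift n n Y = Y.
Proof. by case: n Y => [|n] Y /=; rewrite ?eqxx conform_mx_id. Qed.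

Lemma liftI_S n M (Y : 'M[C]_(Dim d n)) : (n <= M)%N ->
  lift n M.+1 Y = Itop M (lift n M Y).
Proof. by move=> le; rewrite /= ifN // neq_ltn ltnS le. Qed.

Lemma liftI_lin0 n k a (Y Z : 'M[C]_(Dim d n)) :
  lift n (n + k) (a *: Y + Z) = a *: lift n (n + k) Y + lift n (n + k) Z.
Proof.
elim: k => [|k IH]; first by rewrite addn0 !liftI_id.
by rewrite addnS !liftI_S ?leq_addr // IH /I_top tensmxDR tensmxZR.
Qed.

Lemma liftI_00 n k : lift n (n + k) (0 : 'M[C]_(Dim d n)) = 0.
Proof.
elim: k => [|k IH]; first by rewrite addn0 !liftI_id.
by rewrite addnS !liftI_S ?leq_addr // IH /I_top tensmx0R.
Qed.

Lemma liftIZ n M a (Y : 'M[C]_(Dim d n)) : (n <= M)%N ->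
  lift n M (a *: Y) = a *: lift n M Y.
Proof.
move=> le; rewrite -(subnKC le).
by rewrite -[a *: Y]addr0 liftI_lin0 liftI_00 addr0.
Qed.

Lemma liftID n M (Y Z : 'M[C]_(Dim d n)) : (n <= M)%N ->
  lift n M (Y + Z) = lift n M Y + lift n M Z.
Proof.
move=> le; rewrite -(subnKC le).
by rewrite -[Y]scale1r liftI_lin0 !scale1r.
Qed.

Lemma liftI0 n M : (n <= M)%N -> lift n M (0 : 'M[C]_(Dim d n)) = 0.
Proof. by move=> le; rewrite -(subnKC le) liftI_00. Qed.

Lemma liftI_sum n M I (r : seq I) (P : pred I) (Y : I -> 'M[C]_(Dim d n)) : (n <= M)%N ->
  lift n M (\sum_(i <- r | P i) Y i) = \sum_(i <- r | P i) lift n M (Y i).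
Proof. by move=> le; apply: (big_morph _ (fun Y Z => liftID Y Z le) (liftI0 le)). Qed.

End Lift.

Lemma natinv_real n : (n%:R : C)^-1 \is Num.real.
Proof. by rewrite rpredV realn. Qed.

Definition Pd (d : nat -> nat) n := (\prod_(k < n) d k.*2.+1)%N.

Section Main.
Variable d : nat -> nat.
Local Notation lift n M := (@liftI C d n M).

Lemma PdS n : Pd d n.+1 = (Pd d n * d n.*2.+1)%N.
Proof. by rewrite /Pd big_ord_recr. Qed.

Lemma Pd_neq0 N n : (forall k, (k < N.*2)%N -> (0 < d k)%N) -> (n <= N)%N ->
  (Pd d n)%:R != 0 :> C.
Proof.
move=> hd; rewrite pnatr_eq0 -lt0n; elim: n => [|n IH] le; first by rewrite /Pd big_ord0.
rewrite PdS muln_gt0 IH ?(ltnW le) // hd //.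
by rewrite -doubleS leq_double.
Qed.

Lemma d_neq0 N k : (forall k, (k < N.*2)%N -> (0 < d k)%N) -> (k < N.*2)%N -> (d k)%:R != 0 :> C.
Proof. by move=> hd lt; rewrite pnatr_eq0 -lt0n hd. Qed.

Lemma suff_dir N (mE mF : nat -> nat)
    (E : forall k : nat, 'I_(mE k) -> 'M[C]_(d k))
    (F : forall k : nat, 'I_(mF k) -> 'M[C]_(Dim d k.+1)) :
  (0 < N)%N ->
  (forall k : nat, (k < N.*2)%N -> (0 < d k)%N) ->
  (forall m : nat, (m < N)%N ->
     real_basis (@traceless_herm_op C (d m.*2.+1)) (E m.*2.+1)) ->
  forall (R X : 'M[C]_(Dim d N.*2)), in_real_span_D E F X ->
  R = (Pd d N)%:R^-1 *: 1%:M + X -> comb_normalized R.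
Proof.
move=> hN hd hE R X [c [cr ->]] ->.
pose Zm (m : 'I_N) : 'M[C]_(Dim d (m : nat).*2.+2) :=
  \sum_(a < mE (m:nat).*2.+1) \sum_(j < mF (m:nat).*2) c m a j *: tensmx (E _ a) (F _ j).
have le2 (m : 'I_N) : ((m : nat).*2.+2 <= N.*2)%N by rewrite -doubleS leq_double.
have XE : \sum_(m < N) \sum_(a < mE (m : nat).*2.+1) \sum_(j < mF (m : nat).*2)
          c m a j *: D_elem N (E _ a) (F _ j) = \sum_(m < N) lift ((m : nat).*2.+2) (N.*2) (Zm m).
  apply: eq_bigr => m _; rewrite /Zm liftI_sum //; apply: eq_bigr => a _.
  rewrite liftI_sum //; apply: eq_bigr => j _; by rewrite liftIZ.
have TrZ (m : 'I_N) : ptrace (Zm m) = 0.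
  rewrite ptrace_sum big1 // => a _; rewrite ptrace_sum big1 // => j _.
  case: (hE m (ltn_ord m)) => EP _ _; have [_ trE] := EP a.
  by rewrite ptraceZ ptrace_tens trE scale0r scaler0.
exists (fun n => (Pd d n)%:R^-1 *: 1%:M +
   \sum_(m < N | ((m : nat) < n)%N) ((Pd d N)%:R / (Pd d n)%:R) *: lift ((m : nat).*2.+2) (n.*2) (Zm m)).
split.
- rewrite XE; congr (_ + _); apply: eq_big => [m|m _]; first by rewrite ltn_ord.
  by rewrite divff ?scale1r // (Pd_neq0 hd).
- rewrite /Tr_top ptraceD ptraceZ ptrace1 ptrace_sum big1 ?addr0.
    rewrite scalerA /Pd big_ord1 mulVf ?scale1r //; apply: (d_neq0 hd).
    by rewrite -(leq_double 1) in hN.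
  case=> [[|mv] Hm] //= _.
  by rewrite conform_mx_id ptraceZ (TrZ (Ordinal Hm)) scaler0.
- move=> m /andP [m0 mN].
  have dm : (d m.*2.+1)%:R != 0 :> C by apply: (d_neq0 hd); rewrite -doubleS leq_double.
  have Pm : (Pd d m)%:R != 0 :> C by apply: (Pd_neq0 hd); rewrite ltnW.
  rewrite /Tr_top /I_top; cbv beta; rewrite ptraceD ptraceZ ptrace1 tensmxDR tensmxZR tensmx11.
  rewrite ptrace_sum tensmx_sumR; congr (_ + _).
    by rewrite scalerA PdS natrM invfM -mulrA mulVf ?mulr1.
  rewrite big_mkcond [RHS]big_mkcond; apply: eq_bigr => -[kv Hk] _.
  case: (ltngtP kv m) => [lt|gt|eq].
  + rewrite ltnS (ltnW lt) ptraceZ (liftI_S (M := m.*2.+1)); last by rewrite -!muln2 /=; lia.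
    rewrite liftI_S; last by rewrite -doubleS leq_double.
    rewrite /I_top ptrace_tens tr1 scalerA; congr (_ *: _).
    by rewrite PdS natrM invfM mulrA mulfVK.
  + by rewrite ltnNge gt.
  + subst kv; rewrite ltnSn ptraceZ (liftI_id (n := m.*2.+2)) (TrZ (Ordinal Hk)).
    by rewrite scaler0.
Qed.



Lemma nec_dir N (mE mF : nat -> nat)
    (E : forall k : nat, 'I_(mE k) -> 'M[C]_(d k))
    (F : forall k : nat, 'I_(mF k) -> 'M[C]_(Dim d k.+1)) :
  (0 < N)%N ->
  (forall k : nat, (k < N.*2)%N -> (0 < d k)%N) ->
  (forall m : nat, (m < N)%N ->
     real_basis (@traceless_herm_op C (d m.*2.+1)) (E m.*2.+1)) ->
  (forall m : nat, (m < N)%N ->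
     real_basis (@herm_op C (Dim d m.*2.+1)) (F m.*2)) ->
  forall R : 'M[C]_(Dim d N.*2), herm_op R -> comb_normalized R ->
  exists X : 'M[C]_(Dim d N.*2), in_real_span_D E F X /\
       R = (Pd d N)%:R^-1 *: 1%:M + X.
Proof.
move=> hN hd hE hF R hR [Rs [HN H1 Hm]].
have hermRs : forall n, (0 < n <= N)%N -> herm_op (Rs n).
  suff H : forall k, (k < N)%N -> herm_op (Rs (N - k)%N).
    move=> n /andP[n0 nN]; have := H (N - n)%N; rewrite subKn //; apply.
    by rewrite ltn_subrL n0 hN.
  elim => [|k IH] lt; first by rewrite subn0 HN.
  have e : (N - k = (N - k.+1).+1)%N by rewrite subnSK // ltnW.
  move: (IH (ltnW lt)); rewrite e; set m := (N - k.+1)%N => h.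
  have m0 : (0 < m)%N by rewrite subn_gt0.
  have mN : (m < N)%N by rewrite /m ltn_subrL hN.
  have ht : herm_op (@Tr_top C d m.*2.+1 (Rs m.+1)) := herm_ptrace h.
  rewrite Hm ?m0 // in ht.
  have := hermZ (natinv_real (d m.*2))
     (herm_ptrace ht).
  rewrite /I_top ptrace_tens tr1 scalerA mulVf ?scale1r //.
  by apply: (d_neq0 hd); rewrite ltn_double.
pose Z (k : nat) : 'M[C]_(Dim d k.*2.+2) := Rs k.+1 -
   (d k.*2.+1)%:R^-1 *: @I_top C d k.*2.+1 (@Tr_top C d k.*2.+1 (Rs k.+1)).
have dk k : (k < N)%N -> (d k.*2.+1)%:R != 0 :> C.
  by move=> lt; apply: (d_neq0 hd); rewrite -doubleS leq_double.
have HZ k : (k < N)%N -> exists c : 'I_(mE k.*2.+1) -> 'I_(mF k.*2) -> C,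
    (forall a j, c a j \is Num.real) /\
    Z k = \sum_(a < mE k.*2.+1) \sum_(j < mF k.*2) c a j *: tensmx (E _ a) (F _ j).
  move=> lt; apply: (dec (hE k lt) (hF k lt)).
    apply: hermD; first by apply: (hermRs k.+1); rewrite ltnS lt.
    apply/hermN/hermZ; first exact: natinv_real.
    by apply/herm_tens1/herm_ptrace/(hermRs k.+1); rewrite ltnS lt.
  rewrite /Z /I_top /Tr_top ptraceD ptraceN ptraceZ ptrace_tens tr1 scalerA mulVf ?dk //.
  by rewrite scale1r subrr.
have ZE k : Rs k.+1 = (d k.*2.+1)%:R^-1 *: @I_top C d k.*2.+1 (@Tr_top C d k.*2.+1 (Rs k.+1)) + Z k.
  by rewrite /Z addrC subrK.
clearbody Z.
have S : forall n, (0 < n)%N -> (n <= N)%N ->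
  Rs n = (Pd d n)%:R^-1 *: 1%:M +
    \sum_(k < n) ((Pd d k.+1)%:R / (Pd d n)%:R) *: lift (k.*2.+2) (n.*2) (Z k).
  elim => [//|n IH] _ nN.
  have RsE := ZE n.
  case: n IH nN RsE => [|n] IH nN RsE.
    rewrite RsE H1 big_ord1 /I_top tensmx11 /Pd !big_ord1 divff ?dk // scale1r.
    by rewrite (liftI_id (n := 2)).
  rewrite RsE (Hm n.+1) ?nN // (IH isT (ltnW nN)).
  have Pn : (Pd d n.+1)%:R != 0 :> C by apply: (Pd_neq0 hd); rewrite ltnW.
  have dn : (d n.+1.*2.+1)%:R != 0 :> C by apply: dk.
  rewrite /I_top !tensmxDR !tensmxZR !tensmx11 !tensmx_sumR scalerDr scalerA scaler_sumr.
  rewrite [X in _ = _ + X]big_ord_recr [RHS]addrA; congr (_ + _ + _).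
  - by rewrite (PdS n.+1) natrM invfM mulrC.
  - apply: eq_bigr => k _; rewrite !scalerA (liftI_S (M := n.+1.*2.+1)); last first.
      by rewrite -!muln2 /=; move: (ltn_ord k); lia.
    rewrite (liftI_S (M := n.+1.*2)); last by rewrite -!muln2 /=; move: (ltn_ord k); lia.
    rewrite /I_top; congr (_ *: _).
    by rewrite (PdS n.+1) natrM invfM /=; field; rewrite dn Pn.
  - by rewrite divff ?scale1r ?(liftI_id (n := n.+1.*2.+2)) // (Pd_neq0 hd).
have cz (m : 'I_N) : {c : 'I_(mE (m : nat).*2.+1) -> 'I_(mF (m : nat).*2) -> C |
    (forall a j, c a j \is Num.real) /\
    Z m = \sum_(a < mE (m : nat).*2.+1) \sum_(j < mF (m : nat).*2) c a j *: tensmx (E _ a) (F _ j)}.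
  by apply: constructive_indefinite_description; apply: HZ.
exists (\sum_(k < N) ((Pd d k.+1)%:R / (Pd d N)%:R) *: lift (k.*2.+2) (N.*2) (Z k)).
split; last by rewrite -HN S.
exists (fun (m : 'I_N) a j => ((Pd d (m : nat).+1)%:R / (Pd d N)%:R) * sval (cz m) a j); split.
  move=> m a j; apply: rpredM; last by case: (cz m) => c [].
  by apply: rpredM; [exact: realn | exact: natinv_real].
apply: eq_bigr => m _; case: (cz m) => c [_ Zc] /=; rewrite Zc.
have le2 : ((m : nat).*2.+2 <= N.*2)%N by rewrite -doubleS leq_double.
rewrite liftI_sum // scaler_sumr; apply: eq_bigr => a _.
rewrite liftI_sum // scaler_sumr; apply: eq_bigr => j _.
by rewrite liftIZ // scalerA.
Qed.

End Main.
End C.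

Unset Implicit Arguments.

Theorem mainTheorem3 (C : numClosedFieldType) (d : nat -> nat) (N : nat)
    (mE mF : nat -> nat)
    (E : forall k : nat, 'I_(mE k) -> 'M[C]_(d k))
    (F : forall k : nat, 'I_(mF k) -> 'M[C]_(Dim d k.+1)) :
  (0 < N)%N ->
  (forall k : nat, (k < N.*2)%N -> (0 < d k)%N) ->
  (forall m : nat, (m < N)%N ->
     real_basis (@traceless_herm_op C (d m.*2.+1)) (E m.*2.+1)) ->
  (forall m : nat, (m < N)%N ->
     real_basis (@herm_op C (Dim d m.*2.+1)) (F m.*2)) ->
  forall R : 'M[C]_(Dim d N.*2), herm_op R ->
  (comb_normalized R <->
     exists X : 'M[C]_(Dim d N.*2), in_real_span_D E F X /\
       R = ((\prod_(m < N) d m.*2.+1)%N)%:R^-1 *: 1%:M + X) /\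
  (det_comb R <->
     psd R /\
     exists X : 'M[C]_(Dim d N.*2), in_real_span_D E F X /\
       R = ((\prod_(m < N) d m.*2.+1)%N)%:R^-1 *: 1%:M + X).
Proof.
move=> hN hd hE hF R hR.
have iff1 : comb_normalized R <->
   (exists X : 'M[C]_(Dim d N.*2), in_real_span_D E F X /\
       R = ((\prod_(m < N) d m.*2.+1)%N)%:R^-1 *: 1%:M + X).
  split; first exact: (nec_dir hN hd hE hF hR).
  by case=> X [HX HR]; apply: (suff_dir hN hd hE HX HR).
split => //; split.
  by case=> hp /iff1.
by case=> hp /iff1.
Qed.
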